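(* Let $X$ be an infinite dimensional real Banach space and let $E \subset X^\ast$ be a weak$^\ast$-closed and bounded set having no vector of maximum length, i.e. there is no $e\in E$ with $\|e\|=\sup\{\|e'\|: e'\in E\}$. Then the weak$^\ast$-closed convex hull $K$ of $E$ has no vector of maximum length, i.e. there is no $k\in K$ with $\|k\|=\sup\{\|k'\|:k'\in K\}$. Equivalently: if $E$ is not remotal from a point $x^\ast\in X^\ast$, then neither is $K$.
   Context: For a bounded set $E$ in a Banach space $Z$ and $z\in Z$, let $D(z,E)=\sup\{\|z-e\|: e\in E\}$. $E$ is called remotal from $z$ if there exists $e_0\in E$ with $\|z-e_0\|=D(z,E)$ (such $e_0$ is a farthest point of $E$ from $z$); $E$ is remotal if it is remotal from every point of $Z$. The weak$^\ast$-closed convex hull of $E\subset X^\ast$ is the closure of the convex hull of $E$ in the weak$^\ast$ topology $\sigma(X^\ast,X)$. *)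

(* Defs.v *)
From Stdlib Require Import Reals Lra ClassicalEpsilon.
Open Scope R_scope.

Record Banach := {
  vec :> Type;
  vzero : vec;
  vadd : vec -> vec -> vec;
  vopp : vec -> vec;
  vscal : R -> vec -> vec;
  vnorm : vec -> R;
  vadd_assoc : forall x y z, vadd x (vadd y z) = vadd (vadd x y) z;
  vadd_comm : forall x y, vadd x y = vadd y x;
  vadd_0 : forall x, vadd x vzero = x;
  vadd_opp : forall x, vadd x (vopp x) = vzero;
  vscal_assoc : forall a b x, vscal a (vscal b x) = vscal (a * b) x;
  vscal_1 : forall x, vscal 1 x = x;
  vscal_distr_v : forall a x y, vscal a (vadd x y) = vadd (vscal a x) (vscal a y);
  vscal_distr_s : forall a b x, vscal (a + b) x = vadd (vscal a x) (vscal b x);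
  vnorm_nonneg : forall x, 0 <= vnorm x;
  vnorm_eq0 : forall x, vnorm x = 0 -> x = vzero;
  vnorm_scal : forall a x, vnorm (vscal a x) = Rabs a * vnorm x;
  vnorm_triangle : forall x y, vnorm (vadd x y) <= vnorm x + vnorm y;
  vcomplete : forall u : nat -> vec,
    (forall eps, 0 < eps -> exists N, forall m n, (N <= m)%nat -> (N <= n)%nat ->
        vnorm (vadd (u m) (vopp (u n))) < eps) ->
    exists l, forall eps, 0 < eps -> exists N, forall n, (N <= n)%nat ->
        vnorm (vadd (u n) (vopp l)) < eps
}.

Arguments vzero {_}.
Arguments vadd {_} _ _.
Arguments vscal {_} _ _.
Arguments vnorm {_} _.

Fixpoint lincomb {X : Banach} (n : nat) (c : nat -> R) (v : nat -> X) : X :=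
  match n with
  | O => vzero
  | S k => vadd (lincomb k c v) (vscal (c k) (v k))
  end.

Definition infinite_dimensional (X : Banach) : Prop :=
  forall n : nat, exists v : nat -> X,
    forall c : nat -> R, lincomb n c v = vzero -> forall i, (i < n)%nat -> c i = 0.

Definition in_dual {X : Banach} (f : X -> R) : Prop :=
  (forall x y, f (vadd x y) = f x + f y) /\
  (forall a x, f (vscal a x) = a * f x) /\
  (exists M, forall x, Rabs (f x) <= M * vnorm x).

(* Supremum of a set of reals (meaningful when the set is nonempty and bounded above). *)
Definition sup_set (P : R -> Prop) : R :=
  epsilon (inhabits 0) (fun r => is_lub P r).

Definition dnorm {X : Banach} (f : X -> R) : R :=
  sup_set (fun t => exists x, vnorm x <= 1 /\ t = Rabs (f x)).

Definition dual_subset {X : Banach} (S : (X -> R) -> Prop) : Prop :=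
  forall f, S f -> in_dual f.

Definition dual_bounded {X : Banach} (S : (X -> R) -> Prop) : Prop :=
  exists M, forall f, S f -> dnorm f <= M.

Fixpoint rsum (n : nat) (a : nat -> R) : R :=
  match n with O => 0 | S k => rsum k a + a k end.

(* weak* closure of S inside X^*: basic weak* neighbourhoods of f are given by
   finitely many points x_0..x_{n-1} and eps > 0. *)
Definition wstar_closure {X : Banach} (S : (X -> R) -> Prop) : (X -> R) -> Prop :=
  fun f => in_dual f /\
    forall (n : nat) (xs : nat -> X) (eps : R), 0 < eps ->
      exists g, S g /\ forall i, (i < n)%nat -> Rabs (f (xs i) - g (xs i)) < eps.

Definition wstar_closed {X : Banach} (S : (X -> R) -> Prop) : Prop :=
  forall f, wstar_closure S f -> S f.

Definition conv_hull {X : Banach} (S : (X -> R) -> Prop) : (X -> R) -> Prop :=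
  fun g => exists (n : nat) (c : nat -> R) (e : nat -> X -> R),
    (forall i, (i < n)%nat -> 0 <= c i /\ S (e i)) /\
    rsum n c = 1 /\
    forall x, g x = rsum n (fun i => c i * e i x).

Definition wstar_closed_conv_hull {X : Banach} (S : (X -> R) -> Prop) :=
  wstar_closure (conv_hull S).

Definition has_max_length {X : Banach} (S : (X -> R) -> Prop) : Prop :=
  exists s, S s /\ dnorm s = sup_set (fun t => exists s', S s' /\ t = dnorm s').

(* Main.v *)
Require Import Defs.
From Stdlib Require Import Reals Lra Lia ClassicalEpsilon Classical FunctionalExtensionality PropExtensionality.


Section Zorn.
Variable A : Type.
Variable R0 : A -> A -> Prop.
Hypothesis R0refl : forall a, R0 a a.
Hypothesis R0trans : forall a b c, R0 a b -> R0 b c -> R0 a c.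

Definition zchain (C : A -> Prop) := forall a b, C a -> C b -> R0 a b \/ R0 b a.

Hypothesis ubH : forall C, zchain C -> exists u, forall a, C a -> R0 a u.

Lemma set_ext (C D : A -> Prop) : (forall a, C a -> D a) -> (forall a, D a -> C a) -> C = D.
Proof. intros H1 H2; apply functional_extensionality; intro a; apply propositional_extensionality; split; auto. Qed.

Theorem zorn_gen : exists m, forall a, R0 m a -> R0 a m.
Proof.
  apply NNPP; intro Hno.
  assert (Hs : forall m, exists a, R0 m a /\ ~ R0 a m).
  { intro m; apply NNPP; intro H; apply Hno; exists m; intros a Ha; apply NNPP; intro H'; apply H; exists a; auto. }
  set (succ := fun m => proj1_sig (constructive_indefinite_description _ (Hs m))).
  assert (Hsucc : forall m, R0 m (succ m) /\ ~ R0 (succ m) m).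
  { intro m; unfold succ; destruct constructive_indefinite_description; simpl; auto. }
  assert (Hub : forall C, exists u, zchain C -> forall a, C a -> R0 a u).
  { intro C. destruct (classic (zchain C)) as [Hc|Hc].
    - destruct (ubH C Hc) as [u Hu]; exists u; auto.
    - destruct (ubH (fun _ => False)) as [u _]. { intros a b []. } exists u; intro; contradiction. }
  set (ub := fun C => proj1_sig (constructive_indefinite_description _ (Hub C))).
  assert (Hub' : forall C, zchain C -> forall a, C a -> R0 a (ub C)).
  { intro C; unfold ub; destruct constructive_indefinite_description; simpl; auto. }
  set (g := fun C => succ (ub C)).
  assert (Hg : forall C, zchain C -> forall a, C a -> R0 a (g C) /\ ~ R0 (g C) a).
  { intros C HC a Ha. destruct (Hsucc (ub C)) as [H1 H2]. split.
    - apply R0trans with (ub C); auto.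
    - intro H; apply H2; apply R0trans with a; auto. }
  set (h := fun C : A -> Prop => fun a => C a \/ a = g C).
  set (sub := fun C D : A -> Prop => forall a, C a -> D a).
  set (bigU := fun (D : (A -> Prop) -> Prop) => fun a => exists d, D d /\ d a).
  set (clo := fun S : (A -> Prop) -> Prop =>
     (forall C, S C -> S (h C)) /\
     (forall D, (forall d, D d -> S d) -> (forall d d', D d -> D d' -> sub d d' \/ sub d' d) -> S (bigU D))).
  set (T := fun C => forall S, clo S -> S C).
  assert (Tclo : clo T).
  { split.
    - intros C HC S HS. apply (proj1 HS). apply HC; auto.
    - intros D HD Hch S HS. apply (proj2 HS); auto. intros d Hd; apply HD; auto. }
  assert (subh : forall C, sub C (h C)). { intros C a Ha; left; auto. }
  assert (Tch : forall C, T C -> zchain C).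
  { intros C HC. apply (HC zchain). split.
    - intros C0 H0 a b Ha Hb. destruct Ha as [Ha|Ha]; destruct Hb as [Hb|Hb].
      + apply H0; auto.
      + subst b. left; apply (Hg C0 H0 a Ha).
      + subst a. right; apply (Hg C0 H0 b Hb).
      + subst; left; auto.
    - intros D HD Hch a b [d [Hd Ha]] [d' [Hd' Hb]].
      destruct (Hch d d' Hd Hd') as [H|H].
      + apply (HD d'); auto.
      + apply (HD d); auto. }
  set (ext := fun c => T c /\ forall x, T x -> sub x c -> ~ sub c x -> sub (h x) c).
  set (Mc := fun c x => sub x c \/ sub (h c) x).
  assert (L1 : forall c, ext c -> forall x, T x -> Mc c x).
  { intros c [Tc Hc] x Tx. assert (HM : clo (fun x => T x /\ Mc c x)).
    { split.
      - intros y [Ty HMy]. split. apply (proj1 Tclo); auto.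
        destruct HMy as [H|H].
        + destruct (classic (sub c y)) as [H'|H'].
          * assert (c = y) by (apply set_ext; auto). subst y. right; intros a Ha; auto.
          * left. apply Hc; auto.
        + right. intros a Ha. apply subh, H, Ha.
      - intros D HD Hch. split.
        + apply (proj2 Tclo); auto. intros d Hd; apply HD; auto.
        + destruct (classic (exists d, D d /\ sub (h c) d)) as [[d [Hd Hs0]]|Hn].
          * right. intros a Ha. exists d; split; auto.
          * left. intros a [d [Hd Ha]]. destruct (proj2 (HD d Hd)) as [H|H]; auto.
            exfalso; apply Hn; exists d; auto. }
    apply (Tx _ HM). }
  assert (L2 : forall c, T c -> ext c).
  { intros c Tc. apply (Tc ext). split.
    - intros c0 Hc0. split. apply (proj1 Tclo), (proj1 Hc0).
      intros x Tx Hsx Hns. destruct (L1 c0 Hc0 x Tx) as [H|H].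
      + destruct (classic (sub c0 x)) as [H'|H'].
        * assert (c0 = x) by (apply set_ext; auto). subst x. intros a Ha; auto.
        * intros a Ha. apply subh. apply (proj2 Hc0 x Tx H H'); auto.
      + contradiction.
    - intros D HD Hch. split.
      + apply (proj2 Tclo); auto. intros d Hd; apply (proj1 (HD d Hd)).
      + intros x Tx Hsx Hns.
        destruct (classic (exists d, D d /\ ~ sub (h d) x)) as [[d [Hd Hd2]]|Hn].
        * destruct (L1 d (HD d Hd) x Tx) as [Hxd|Hxd]; [|contradiction].
          destruct (classic (sub d x)) as [Hdx|Hdx].
          -- assert (d = x) by (apply set_ext; auto). subst x.
             destruct (classic (exists d', D d' /\ ~ sub d' d)) as [[d' [Hd' Hd'2]]|Hn2].
             ++ destruct (L1 d (HD d Hd) d' (proj1 (HD d' Hd'))) as [H|H]; [contradiction|].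
                intros a Ha. exists d'; split; auto.
             ++ exfalso; apply Hns. intros a [d' [Hd' Ha]]. apply NNPP; intro Hna.
                apply Hn2. exists d'; split; [auto|]. intro Hsub; apply Hna, Hsub, Ha.
          -- intros a Ha. exists d; split; auto. apply (proj2 (HD d Hd) x Tx Hxd Hdx); auto.
        * exfalso; apply Hns. intros a [d [Hd Ha]]. apply NNPP; intro Hna.
          apply Hn. exists d; split; [auto|]. intro H; apply Hna, H, subh, Ha. }
  assert (Tchain : forall x y, T x -> T y -> sub x y \/ sub y x).
  { intros x y Tx Ty. destruct (L1 x (L2 x Tx) y Ty) as [H|H]; auto.
    left; intros a Ha; apply H, subh, Ha. }
  set (cs := bigU T).
  assert (Tcs : T cs) by (apply (proj2 Tclo); auto).
  assert (Thcs : T (h cs)) by (apply (proj1 Tclo); auto).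
  assert (Hin : cs (g cs)). { exists (h cs); split; auto. right; auto. }
  destruct (Hg cs (Tch cs Tcs) (g cs) Hin) as [_ H]. apply H, R0refl.
Qed.
End Zorn.

Open Scope R_scope.

Definition isfilter {I : Type} (F : (I -> Prop) -> Prop) :=
  F (fun _ => True) /\
  (forall S T, F S -> (forall i, S i -> T i) -> F T) /\
  (forall S T, F S -> F T -> F (fun i => S i /\ T i)) /\
  ~ F (fun _ => False).

Definition ultra {I : Type} (F : (I -> Prop) -> Prop) :=
  isfilter F /\ forall S, F S \/ F (fun i => ~ S i).

Lemma filter_mono {I} (F : (I -> Prop) -> Prop) S T : isfilter F -> F S -> (forall i, S i -> T i) -> F T.
Proof. intros [_ [H _]] ; eauto. Qed.

Lemma filter_and {I} (F : (I -> Prop) -> Prop) S T : isfilter F -> F S -> F T -> F (fun i => S i /\ T i).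
Proof. intros [_ [_ [H _]]]; eauto. Qed.

Lemma filter_ex {I} (F : (I -> Prop) -> Prop) S : isfilter F -> F S -> exists i, S i.
Proof. intros HF HS. apply NNPP; intro H. destruct HF as [_ [Hm [_ Hp]]]. apply Hp.
  apply (Hm S); auto. intros i Hi; apply H; exists i; auto. Qed.

Lemma filter_true {I} (F : (I -> Prop) -> Prop) S : isfilter F -> (forall i, S i) -> F S.
Proof. intros HF H. apply (filter_mono F (fun _ => True)); auto. apply HF. Qed.

Lemma ultrafilter_lemma {I : Type} (Bs : (I -> Prop) -> Prop) :
  (exists b, Bs b) -> (forall b, Bs b -> exists i, b i) ->
  (forall b1 b2, Bs b1 -> Bs b2 -> exists b3, Bs b3 /\ forall i, b3 i -> b1 i /\ b2 i) ->
  exists U, ultra U /\ forall b, Bs b -> U b.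
Proof.
  intros [b0 Hb0] Hne Hdir.
  set (F0 := fun S : I -> Prop => exists b, Bs b /\ forall i, b i -> S i).
  assert (HF0 : isfilter F0 /\ forall b, Bs b -> F0 b).
  { split; [split; [|split; [|split]]|].
    - exists b0; split; auto.
    - intros S T [b [Hb H]] HST. exists b; split; auto.
    - intros S T [b1 [Hb1 H1]] [b2 [Hb2 H2]]. destruct (Hdir b1 b2 Hb1 Hb2) as [b3 [Hb3 H3]].
      exists b3; split; auto. intros i Hi; destruct (H3 i Hi); auto.
    - intros [b [Hb H]]. destruct (Hne b Hb) as [i Hi]. apply (H i Hi).
    - intros b Hb; exists b; split; auto. }
  set (A := {F : (I -> Prop) -> Prop | isfilter F /\ forall b, Bs b -> F b}).
  set (R0 := fun (x y : A) => forall S, proj1_sig x S -> proj1_sig y S).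
  destruct (zorn_gen A R0) as [[U [HU HBU]] Hmax].
  - intros x S H; auto.
  - intros x y z H1 H2 S H; auto.
  - intros C HC.
    set (ubF := fun S => F0 S \/ exists x, C x /\ proj1_sig x S).
    assert (Hu : isfilter ubF /\ forall b, Bs b -> ubF b).
    { destruct HF0 as [HF0f HF0b].
      split; [split; [|split; [|split]]|].
      - left; apply HF0f.
      - intros S T [H|[x [Hx H]]] HST.
        + left; apply (filter_mono F0 S); auto.
        + right; exists x; split; auto. apply (filter_mono _ S); auto. apply (proj2_sig x).
      - intros S T [H1|[x [Hx H1]]] [H2|[y [Hy H2]]].
        + left; apply filter_and; auto.
        + right; exists y; split; auto. destruct (proj2_sig y) as [Hy1 Hy2].
          apply filter_and; auto. destruct H1 as [b [Hb Hb']]. apply (filter_mono _ b); auto.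
        + right; exists x; split; auto. destruct (proj2_sig x) as [Hx1 Hx2].
          apply filter_and; auto. destruct H2 as [b [Hb Hb']]. apply (filter_mono _ b); auto.
        + destruct (HC x y Hx Hy) as [Hxy|Hxy].
          * right; exists y; split; auto. apply filter_and; auto. apply (proj2_sig y).
          * right; exists x; split; auto. apply filter_and; auto. apply (proj2_sig x).
      - intros [H|[x [Hx H]]]. apply HF0f; auto. apply (proj2_sig x); auto.
      - intros b Hb; left; apply HF0b; auto. }
    exists (exist _ ubF Hu). intros x Hx S HS. simpl. right; exists x; auto.
  - exists U; split; auto. split; auto.
    intros S. destruct (classic (U S)) as [H|H]; [left; auto|right].
    apply NNPP; intro Hn.
    assert (Hmeet : forall T, U T -> exists i, T i /\ S i).
    { intros T HT. apply NNPP; intro H0. apply Hn. apply (filter_mono U T); auto.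
      intros i Hi HSi; apply H0; exists i; auto. }
    set (U' := fun T => exists A0, U A0 /\ forall i, A0 i -> S i -> T i).
    assert (HU' : isfilter U' /\ forall b, Bs b -> U' b).
    { split; [split; [|split; [|split]]|].
      - exists (fun _ => True); split; auto. apply HU.
      - intros T1 T2 [A0 [HA H1]] H12. exists A0; split; auto.
      - intros T1 T2 [A1 [HA1 H1]] [A2 [HA2 H2]]. exists (fun i => A1 i /\ A2 i); split.
        apply filter_and; auto. intros i [Hi1 Hi2] HSi; split; auto.
      - intros [A0 [HA H1]]. destruct (Hmeet A0 HA) as [i [Hi HSi]]. apply (H1 i Hi HSi).
      - intros b Hb. exists b; split; auto. }
    assert (HR : R0 (exist _ U (conj HU HBU)) (exist _ U' HU')).
    { intros T HT. simpl. exists T; split; auto. }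
    apply H. apply (Hmax _ HR). simpl. exists (fun _ => True); split; auto. apply HU.
Qed.

Lemma rab (a b : R) : Rabs a <= b -> -b <= a /\ a <= b.
Proof. unfold Rabs; destruct Rcase_abs; lra. Qed.
Lemma rabl (a b : R) : Rabs a < b -> -b < a /\ a < b.
Proof. unfold Rabs; destruct Rcase_abs; lra. Qed.
Lemma rab2 (a b : R) : -b <= a -> a <= b -> Rabs a <= b.
Proof. unfold Rabs; destruct Rcase_abs; lra. Qed.
Lemma rabl2 (a b : R) : -b < a -> a < b -> Rabs a < b.
Proof. unfold Rabs; destruct Rcase_abs; lra. Qed.

Definition conv {I} (U : (I -> Prop) -> Prop) (a : I -> R) (l : R) :=
  forall eps, 0 < eps -> U (fun i => Rabs (a i - l) < eps).

Lemma conv_unique {I} (U : (I -> Prop) -> Prop) a l1 l2 :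
  isfilter U -> conv U a l1 -> conv U a l2 -> l1 = l2.
Proof.
  intros HU H1 H2. apply NNPP; intro Hne.
  set (e := Rabs (l1 - l2) / 2).
  assert (He : 0 < e). { unfold e. assert (l1 - l2 <> 0) by lra. apply Rabs_pos_lt in H. lra. }
  destruct (filter_ex U _ HU (filter_and U _ _ HU (H1 e He) (H2 e He))) as [i [Hi1 Hi2]].
  assert (Rabs (l1 - l2) <= Rabs (a i - l1) + Rabs (a i - l2)).
  { replace (l1 - l2) with (-(a i - l1) + (a i - l2)) by ring.
    eapply Rle_trans; [apply Rabs_triang|]. rewrite Rabs_Ropp; lra. }
  unfold e in *; lra.
Qed.

Lemma lim_ex {I} (U : (I -> Prop) -> Prop) (a : I -> R) (B : R) :
  ultra U -> U (fun i => Rabs (a i) <= B) -> exists l, conv U a l.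
Proof.
  intros [HU Hult] HB.
  set (P := fun t => U (fun i => t <= a i)).
  assert (Hb : bound P).
  { exists (B + 1). intros t Ht. destruct (Rle_lt_dec t (B+1)) as [H|H]; auto.
    exfalso. destruct (filter_ex U _ HU (filter_and U _ _ HU Ht HB)) as [i [H1 H2]].
    apply rab in H2. lra. }
  assert (Hne : exists t, P t).
  { exists (-B - 1). apply (filter_mono U _ _ HU HB). intros i Hi. apply rab in Hi. lra. }
  destruct (completeness P Hb Hne) as [L [HL1 HL2]].
  exists L. intros eps Heps. apply (filter_mono U (fun i => L - eps < a i /\ a i < L + eps)); auto.
  2:{ intros i [H1 H2]. apply rabl2; lra. }
  apply filter_and; auto.
  - apply NNPP; intro Hn.
    assert (HLe : is_upper_bound P (L - eps)).
    { intros t Ht. destruct (Rle_lt_dec t (L - eps)) as [H|H]; auto. exfalso. apply Hn.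
      apply (filter_mono U _ _ HU Ht). intros i Hi; lra. }
    specialize (HL2 _ HLe). lra.
  - destruct (Hult (fun i => a i < L + eps)) as [H|H]; auto.
    assert (P (L + eps)). { apply (filter_mono U _ _ HU H). intros i Hi. lra. }
    specialize (HL1 _ H0). lra.
Qed.

Lemma conv_plus {I} (U : (I -> Prop) -> Prop) a b la lb :
  isfilter U -> conv U a la -> conv U b lb -> conv U (fun i => a i + b i) (la + lb).
Proof.
  intros HU Ha Hb eps He. apply (filter_mono U _ _ HU (filter_and U _ _ HU (Ha (eps/2) ltac:(lra)) (Hb (eps/2) ltac:(lra)))).
  intros i [H1 H2]. replace (a i + b i - (la + lb)) with ((a i - la) + (b i - lb)) by ring.
  eapply Rle_lt_trans; [apply Rabs_triang|]. lra.
Qed.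

Lemma conv_const {I} (U : (I -> Prop) -> Prop) c : isfilter U -> conv U (fun _ => c) c.
Proof. intros HU eps He. apply filter_true; auto. intros; rewrite Rminus_diag, Rabs_R0; lra. Qed.

Lemma conv_ext {I} (U : (I -> Prop) -> Prop) a b l :
  isfilter U -> U (fun i => a i = b i) -> conv U a l -> conv U b l.
Proof. intros HU He Ha eps Heps. apply (filter_mono U _ _ HU (filter_and U _ _ HU He (Ha eps Heps))).
  intros i [H1 H2]; rewrite <- H1; auto. Qed.

Lemma conv_le {I} (U : (I -> Prop) -> Prop) a b la lb :
  isfilter U -> U (fun i => a i <= b i) -> conv U a la -> conv U b lb -> la <= lb.
Proof.
  intros HU Hle Ha Hb. destruct (Rle_lt_dec la lb) as [H|H]; auto. exfalso.
  set (e := (la - lb)/2).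
  destruct (filter_ex U _ HU (filter_and U _ _ HU Hle (filter_and U _ _ HU (Ha e ltac:(unfold e; lra)) (Hb e ltac:(unfold e; lra))))) as [i [H1 [H2 H3]]].
  apply rabl in H2; apply rabl in H3. unfold e in *; lra.
Qed.

Lemma conv_mul {I} (U : (I -> Prop) -> Prop) a b la lb :
  isfilter U -> conv U a la -> conv U b lb -> conv U (fun i => a i * b i) (la * lb).
Proof.
  intros HU Ha Hb eps He.
  set (K := Rabs la + Rabs lb + 1).
  assert (HK : 0 < K) by (unfold K; pose proof (Rabs_pos la); pose proof (Rabs_pos lb); lra).
  set (d := Rmin 1 (eps / (2 * K))).
  assert (Hd : 0 < d). { unfold d. apply Rmin_glb_lt; [lra|]. apply Rdiv_lt_0_compat; lra. }
  assert (Hd1 : d <= 1) by apply Rmin_l.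
  assert (Hd2 : d <= eps / (2*K)) by apply Rmin_r.
  apply (filter_mono U _ _ HU (filter_and U _ _ HU (Ha d Hd) (Hb d Hd))).
  intros i [H1 H2].
  replace (a i * b i - la * lb) with ((a i - la) * (b i - lb) + (a i - la) * lb + la * (b i - lb)) by ring.
  assert (Hdk : d * K <= eps / 2).
  { apply Rle_trans with (eps / (2 * K) * K). apply Rmult_le_compat_r; lra.
    right; field; lra. }
  eapply Rle_lt_trans. apply Rabs_triang. eapply Rle_lt_trans. apply Rplus_le_compat_r, Rabs_triang.
  rewrite !Rabs_mult.
  pose proof (Rabs_pos (a i - la)). pose proof (Rabs_pos (b i - lb)).
  pose proof (Rabs_pos la). pose proof (Rabs_pos lb).
  assert (Rabs (a i - la) * Rabs (b i - lb) <= d * d) by (apply Rmult_le_compat; lra).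
  assert (Rabs (a i - la) * Rabs lb <= d * Rabs lb) by (apply Rmult_le_compat_r; lra).
  assert (Rabs la * Rabs (b i - lb) <= Rabs la * d) by (apply Rmult_le_compat_l; lra).
  assert (d * d <= d * 1) by (apply Rmult_le_compat_l; lra).
  assert (d * K = d * Rabs la + d * Rabs lb + d * 1) by (unfold K; ring).
  nra.
Qed.

Open Scope R_scope.

Section Basics.
Variable X : Banach.

Lemma vscal0 (x : X) : vscal 0 x = vzero.
Proof.
  assert (H : vscal 0 x = vadd (vscal 0 x) (vscal 0 x)).
  { rewrite <- vscal_distr_s. f_equal. ring. }
  assert (H2 : vadd (vscal 0 x) (vopp X (vscal 0 x)) = vzero) by apply vadd_opp.
  rewrite H in H2 at 1. rewrite <- vadd_assoc, vadd_opp, vadd_0 in H2. exact H2.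
Qed.

Lemma vnorm0 : vnorm (@vzero X) = 0.
Proof. rewrite <- (vscal0 vzero), vnorm_scal, Rabs_R0. ring. Qed.

Lemma dual0 (f : X -> R) : in_dual f -> f vzero = 0.
Proof. intros [_ [Hs _]]. rewrite <- (vscal0 vzero), Hs. ring. Qed.

Definition dset (f : X -> R) := fun t => exists x : X, vnorm x <= 1 /\ t = Rabs (f x).

Lemma sup_set_lub (P : R -> Prop) m : is_lub P m -> sup_set P = m.
Proof.
  intros Hm. unfold sup_set.
  assert (Hex : exists r, is_lub P r) by (exists m; auto).
  destruct (epsilon_spec (inhabits 0) _ Hex) as [H1 H2].
  destruct Hm as [Hm1 Hm2].
  apply Rle_antisym; auto.
Qed.

Lemma dnorm_lub (f : X -> R) : in_dual f -> is_lub (dset f) (dnorm f).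
Proof.
  intros Hf. destruct Hf as [Ha [Hs [Mb HMb]]].
  assert (Hb : bound (dset f)).
  { exists (Rabs Mb). intros t [x [Hx ->]]. eapply Rle_trans; [apply HMb|].
    pose proof (vnorm_nonneg X x). pose proof (Rle_abs Mb). pose proof (Rabs_pos Mb).
    apply Rle_trans with (Rabs Mb * vnorm x). apply Rmult_le_compat_r; lra.
    rewrite <- (Rmult_1_r (Rabs Mb)) at 2. apply Rmult_le_compat_l; lra. }
  assert (Hne : exists t, dset f t) by (exists (Rabs (f vzero)), vzero; split; [rewrite vnorm0; lra|auto]).
  destruct (completeness _ Hb Hne) as [m Hm].
  unfold dnorm. fold (dset f). rewrite (sup_set_lub _ m Hm). auto.
Qed.

Lemma dnorm_nonneg (f : X -> R) : in_dual f -> 0 <= dnorm f.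
Proof. intros Hf. destruct (dnorm_lub f Hf) as [H1 _]. apply Rle_trans with (Rabs (f vzero)).
  apply Rabs_pos. apply H1. exists vzero; split; auto. rewrite vnorm0; lra. Qed.

Lemma dnorm_bound (f : X -> R) : in_dual f -> forall x, Rabs (f x) <= dnorm f * vnorm x.
Proof.
  intros Hf x. destruct (dnorm_lub f Hf) as [H1 _].
  pose proof (vnorm_nonneg X x) as Hn.
  destruct (Req_dec (vnorm x) 0) as [H0|H0].
  - rewrite (vnorm_eq0 X x H0), (dual0 f Hf), Rabs_R0, vnorm0. lra.
  - assert (Hp : 0 < vnorm x) by lra.
    set (y := vscal (/ vnorm x) x).
    assert (Hy : vnorm y = 1).
    { unfold y. rewrite vnorm_scal, Rabs_right. field; lra. left; apply Rinv_0_lt_compat; lra. }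
    assert (Hfy : f y = / vnorm x * f x) by (unfold y; apply (proj1 (proj2 Hf))).
    assert (Rabs (f y) <= dnorm f) by (apply H1; exists y; split; auto; lra).
    rewrite Hfy, Rabs_mult, Rabs_right in H by (left; apply Rinv_0_lt_compat; lra).
    apply (Rmult_le_compat_r (vnorm x)) in H; [|lra].
    replace (/ vnorm x * Rabs (f x) * vnorm x) with (Rabs (f x)) in H by (field; lra). lra.
Qed.

Lemma dnorm_le (f : X -> R) c : in_dual f -> 0 <= c -> (forall x, Rabs (f x) <= c * vnorm x) -> dnorm f <= c.
Proof.
  intros Hf Hc H. destruct (dnorm_lub f Hf) as [_ H2]. apply H2.
  intros t [x [Hx ->]]. eapply Rle_trans; [apply H|].
  rewrite <- (Rmult_1_r c) at 2. apply Rmult_le_compat_l; lra.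
Qed.

Lemma closure_mono (S T : (X -> R) -> Prop) f :
  (forall g, S g -> T g) -> wstar_closure S f -> wstar_closure T f.
Proof. intros H [Hf Hc]. split; auto. intros n xs eps He. destruct (Hc n xs eps He) as [g [Hg Hg2]].
  exists g; split; auto. Qed.

Lemma closure_incl (S : (X -> R) -> Prop) f : in_dual f -> S f -> wstar_closure S f.
Proof. intros Hf Hs. split; auto. intros n xs eps He. exists f; split; auto.
  intros; rewrite Rminus_diag, Rabs_R0; auto. Qed.

Lemma closure_closed (S : (X -> R) -> Prop) : wstar_closed (wstar_closure S).
Proof.
  intros f [Hf Hc]. split; auto. intros n xs eps He.
  destruct (Hc n xs (eps/2) ltac:(lra)) as [g [[Hg Hgc] Hg2]].
  destruct (Hgc n xs (eps/2) ltac:(lra)) as [h [Hh Hh2]].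
  exists h; split; auto. intros i Hi. specialize (Hg2 i Hi); specialize (Hh2 i Hi).
  replace (f (xs i) - h (xs i)) with ((f (xs i) - g (xs i)) + (g (xs i) - h (xs i))) by ring.
  eapply Rle_lt_trans; [apply Rabs_triang|]. lra.
Qed.

Lemma filter_forall_lt {I} (U : (I -> Prop) -> Prop) (P : nat -> I -> Prop) n :
  isfilter U -> (forall j, (j < n)%nat -> U (P j)) -> U (fun i => forall j, (j < n)%nat -> P j i).
Proof.
  intros HU. induction n as [|n IH]; intros H.
  - apply filter_true; auto. intros i j Hj; lia.
  - apply (filter_mono U (fun i => (forall j, (j < n)%nat -> P j i) /\ P n i)); auto.
    + apply filter_and; auto.
    + intros i [H1 H2] j Hj. destruct (Nat.eq_dec j n) as [->|Hne]; auto. apply H1; lia.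
Qed.

Lemma conv_bound {I} (U : (I -> Prop) -> Prop) a l c :
  isfilter U -> U (fun i => Rabs (a i) <= c) -> conv U a l -> Rabs l <= c.
Proof.
  intros HU Hb Ha. apply Rnot_lt_le; intro Hlt.
  set (e := Rabs l - c).
  destruct (filter_ex U _ HU (filter_and U _ _ HU Hb (Ha e ltac:(unfold e; lra)))) as [i [H1 H2]].
  pose proof (Rabs_triang_inv l (a i)). rewrite <- Rabs_Ropp in H2.
  replace (- (a i - l)) with (l - a i) in H2 by ring. unfold e in *; lra.
Qed.

Lemma conv_abs {I} (U : (I -> Prop) -> Prop) a l :
  isfilter U -> conv U a l -> conv U (fun i => Rabs (a i)) (Rabs l).
Proof.
  intros HU Ha eps He. apply (filter_mono U _ _ HU (Ha eps He)). intros i Hi.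
  eapply Rle_lt_trans; [apply Rabs_triang_inv2|]; auto.
Qed.

Definition dual_bd (C : (X -> R) -> Prop) (M : R) :=
  forall g, C g -> in_dual g /\ forall x, Rabs (g x) <= M * vnorm x.

Lemma compact_lim {I} (U : (I -> Prop) -> Prop) (f : I -> X -> R) (C : (X -> R) -> Prop) M :
  ultra U -> wstar_closed C -> dual_bd C M -> U (fun i => C (f i)) ->
  exists g, C g /\ forall x, conv U (fun i => f i x) (g x).
Proof.
  intros HU HC HB Hf. pose proof (proj1 HU) as HU'.
  assert (Hex : forall x, exists l, conv U (fun i => f i x) l).
  { intro x. apply (lim_ex U _ (M * vnorm x) HU). apply (filter_mono U _ _ HU' Hf).
    intros i Hi; apply (HB _ Hi). }
  set (g := fun x => proj1_sig (constructive_indefinite_description _ (Hex x))).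
  assert (Hg : forall x, conv U (fun i => f i x) (g x)).
  { intro x; unfold g; destruct constructive_indefinite_description; auto. }
  exists g; split; auto. apply HC. split.
  - split; [|split].
    + intros x y. apply (conv_unique U (fun i => f i (vadd x y))); auto.
      apply (conv_ext U (fun i => f i x + f i y)); auto.
      * apply (filter_mono U _ _ HU' Hf). intros i Hi. symmetry; apply (proj1 (HB _ Hi)).
      * apply conv_plus; auto.
    + intros a x. apply (conv_unique U (fun i => f i (vscal a x))); auto.
      apply (conv_ext U (fun i => a * f i x)); auto.
      * apply (filter_mono U _ _ HU' Hf). intros i Hi. symmetry; apply (proj1 (HB _ Hi)).
      * apply conv_mul; auto. apply conv_const; auto.
    + exists M. intro x. apply (conv_bound U (fun i => f i x)); auto.
      apply (filter_mono U _ _ HU' Hf). intros i Hi; apply (HB _ Hi).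
  - intros n xs eps He.
    destruct (filter_ex U _ HU' (filter_and U _ _ HU' Hf
       (filter_forall_lt U (fun j i => Rabs (f i (xs j) - g (xs j)) < eps) n HU' (fun j _ => Hg (xs j) eps He))))
      as [i [Hi1 Hi2]].
    exists (f i); split; auto. intros j Hj. rewrite Rabs_minus_sym; auto.
Qed.

Lemma rsum_ext n a b : (forall i, (i < n)%nat -> a i = b i) -> rsum n a = rsum n b.
Proof. induction n; simpl; intros H; auto. rewrite IHn, H; auto. Qed.
Lemma rsum_scal n c a : rsum n (fun i => c * a i) = c * rsum n a.
Proof. induction n; simpl; [ring|]. rewrite IHn; ring. Qed.
Lemma rsum_plus n a b : rsum n (fun i => a i + b i) = rsum n a + rsum n b.
Proof. induction n; simpl; [ring|]. rewrite IHn; ring. Qed.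
Lemma rsum_le n a b : (forall i, (i < n)%nat -> a i <= b i) -> rsum n a <= rsum n b.
Proof. induction n; simpl; intros H; [lra|]. apply Rplus_le_compat; auto. Qed.
Lemma rsum_abs n a : Rabs (rsum n a) <= rsum n (fun i => Rabs (a i)).
Proof. induction n; simpl. rewrite Rabs_R0; lra. eapply Rle_trans; [apply Rabs_triang|]. lra. Qed.
Lemma rsum_zero n a : (forall i, (i < n)%nat -> a i = 0) -> rsum n a = 0.
Proof. intros H. rewrite (rsum_ext n a (fun _ => 0)); auto. clear. induction n; simpl; auto. rewrite IHn; ring. Qed.
Lemma rsum_nonneg n a : (forall i, (i < n)%nat -> 0 <= a i) -> 0 <= rsum n a.
Proof. intros H. rewrite <- (rsum_zero n (fun _ => 0)) by auto. apply rsum_le; auto. Qed.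

Definition ind (P : Prop) (a : R) : R := if excluded_middle_informative P then a else 0.

Lemma rsum_split n (P : nat -> Prop) a :
  rsum n a = rsum n (fun i => ind (P i) (a i)) + rsum n (fun i => ind (~ P i) (a i)).
Proof. rewrite <- rsum_plus. apply rsum_ext. intros i _. unfold ind.
  destruct (excluded_middle_informative (P i)); destruct (excluded_middle_informative (~ P i)); try tauto; ring. Qed.

Lemma conv_hull_bound (S : (X -> R) -> Prop) M g :
  (forall e, S e -> forall x, Rabs (e x) <= M * vnorm x) -> conv_hull S g -> forall x, Rabs (g x) <= M * vnorm x.
Proof.
  intros HS [n [c [e [He [Hc Hg]]]]] x. rewrite Hg.
  eapply Rle_trans; [apply rsum_abs|].
  apply Rle_trans with (rsum n (fun i => c i * (M * vnorm x))).
  - apply rsum_le. intros i Hi. destruct (He i Hi). rewrite Rabs_mult, Rabs_right by lra.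
    apply Rmult_le_compat_l; auto.
  - rewrite (rsum_ext n _ (fun i => (M * vnorm x) * c i)) by (intros; ring).
    rewrite rsum_scal, Hc; lra.
Qed.

Lemma cc_bd (S : (X -> R) -> Prop) M :
  (forall e, S e -> forall x, Rabs (e x) <= M * vnorm x) -> dual_bd (wstar_closure (conv_hull S)) M.
Proof.
  intros HS g [Hg Hc]. split; auto. intros x.
  apply Rnot_lt_le; intro Hlt. set (e := Rabs (g x) - M * vnorm x).
  destruct (Hc 1%nat (fun _ => x) e ltac:(unfold e; lra)) as [h [Hh Hh2]].
  specialize (Hh2 0%nat ltac:(lia)). pose proof (conv_hull_bound S M h HS Hh x).
  pose proof (Rabs_triang_inv (g x) (h x)). unfold e in *; lra.
Qed.

Lemma conv_hull_single (S : (X -> R) -> Prop) e : S e -> conv_hull S e.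
Proof. intros H. exists 1%nat, (fun _ => 1), (fun _ => e). split; [|split].
  - intros i Hi; split; auto; lra.
  - simpl; ring.
  - intros x; simpl; ring. Qed.

End Basics.

Open Scope R_scope.

Lemma choose_impl {A : Type} (a0 : A) (P Q : A -> Prop) (H : Prop) :
  (H -> exists a, Q a) -> exists a, H -> Q a.
Proof. intros Hx. destruct (classic H) as [h|h]. destruct (Hx h) as [a Ha]; exists a; auto. exists a0; tauto. Qed.

Lemma conv_shift (N : nat) (c a b : nat -> R) d :
  (forall j, (j < N)%nat -> 0 <= c j) -> rsum N c = 1 ->
  (forall j, (j < N)%nat -> Rabs (a j - b j) <= d) ->
  Rabs (rsum N (fun j => c j * a j) - rsum N (fun j => c j * b j)) <= d.
Proof.
  intros Hc Hs Hab.
  replace (rsum N (fun j => c j * a j) - rsum N (fun j => c j * b j)) with (rsum N (fun j => c j * (a j - b j))).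
  2:{ rewrite (rsum_ext N _ (fun j => c j * a j + (-1) * (c j * b j))) by (intros; ring).
      rewrite rsum_plus, rsum_scal. ring. }
  eapply Rle_trans; [apply rsum_abs|].
  apply Rle_trans with (rsum N (fun j => d * c j)).
  - apply rsum_le. intros j Hj. rewrite Rabs_mult, Rabs_right by (apply Rle_ge, Hc; auto).
    rewrite Rmult_comm. apply Rmult_le_compat_r; auto.
  - rewrite rsum_scal, Hs; lra.
Qed.

Section Core.
Variable X : Banach.
Variable M : R.
Variable E : (X -> R) -> Prop.
Hypothesis Ecl : wstar_closed E.
Hypothesis Ebd : dual_bd X E M.
Variable k : X -> R.
Hypothesis Hk : wstar_closure (conv_hull E) k.

Definition Pm (C : (X -> R) -> Prop) :=
  wstar_closed C /\ (forall e, C e -> E e) /\ wstar_closure (conv_hull C) k.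

Lemma sub_bd C : (forall e, C e -> E e) -> dual_bd X C M.
Proof. intros H g Hg; apply Ebd; auto. Qed.

Lemma chain_lemma (ch : ((X -> R) -> Prop) -> Prop) :
  (forall D, ch D -> Pm D) ->
  (forall D D', ch D -> ch D' -> (forall e, D e -> D' e) \/ (forall e, D' e -> D e)) ->
  Pm (fun e => E e /\ forall D, ch D -> D e).
Proof.
  intros HP Hch. set (I' := fun e => E e /\ forall D, ch D -> D e).
  split; [|split].
  - intros f Hf. split.
    + apply Ecl. apply (closure_mono X I'); auto. intros g [Hg _]; exact Hg.
    + intros D HD. apply (proj1 (HP D HD)). apply (closure_mono X I'); auto. intros g [_ Hg]; apply Hg; auto.
  - intros e [He _]; exact He.
  - split; [apply Hk|]. intros n xs eps Heps.
    set (good := fun D0 : (X -> R) -> Prop => forall e, D0 e -> exists c, I' c /\ forall j, (j < n)%nat -> Rabs (e (xs j) - c (xs j)) < eps / 2).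
    assert (Hclaim : exists D0, (D0 = E \/ ch D0) /\ good D0).
    { apply NNPP; intro Hn.
      assert (Hbad : forall D0, (D0 = E \/ ch D0) -> exists e, D0 e /\ forall c, I' c -> exists j, (j < n)%nat /\ eps / 2 <= Rabs (e (xs j) - c (xs j))).
      { intros D0 HD0. apply NNPP; intro Hb. apply Hn. exists D0; split; auto. intros e He.
        apply NNPP; intro Hc. apply Hb. exists e; split; auto. intros c Hc'.
        apply NNPP; intro Hj. apply Hc. exists c; split; auto. intros j Hj'.
        apply Rnot_le_lt; intro Hl; apply Hj; exists j; auto. }
      set (sub := fun D : (X -> R) -> Prop => fun D' : (X -> R) -> Prop => (D' = E \/ ch D') /\ forall e, D' e -> D e).
      set (Bs := fun b => exists D, (D = E \/ ch D) /\ b = sub D).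
      assert (HsubE : forall D, (D = E \/ ch D) -> forall e, D e -> E e).
      { intros D [->|HD] e He; auto. apply (HP D HD); auto. }
      destruct (ultrafilter_lemma Bs) as [U [HU HUB]].
      { exists (sub E), E; split; auto. }
      { intros b [D [HD ->]]. exists D; split; auto. }
      { intros b1 b2 [D1 [HD1 ->]] [D2 [HD2 ->]].
        assert (Hm : exists D3, (D3 = E \/ ch D3) /\ (forall e, D3 e -> D1 e) /\ (forall e, D3 e -> D2 e)).
        { destruct HD1 as [->|HD1].
          - exists D2; repeat split; auto. apply HsubE; auto.
          - destruct HD2 as [->|HD2].
            + exists D1; repeat split; auto. apply HsubE; auto.
            + destruct (Hch D1 D2 HD1 HD2) as [H|H].
              * exists D1; repeat split; auto.
              * exists D2; repeat split; auto. }
        destruct Hm as [D3 [HD3 [H31 H32]]]. exists (sub D3); split; [exists D3; auto|].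
        intros D' [HD' H']. split; split; auto. }
      pose proof (proj1 HU) as HU'.
      assert (Hf : forall D', exists e, (D' = E \/ ch D') -> D' e /\ forall c, I' c -> exists j, (j < n)%nat /\ eps / 2 <= Rabs (e (xs j) - c (xs j))).
      { intros D'. apply (choose_impl (fun _ => 0) (fun _ => True) _). apply Hbad. }
      set (f := fun D' => proj1_sig (constructive_indefinite_description _ (Hf D'))).
      assert (Hf' : forall D', (D' = E \/ ch D') -> D' (f D') /\ forall c, I' c -> exists j, (j < n)%nat /\ eps / 2 <= Rabs (f D' (xs j) - c (xs j))).
      { intros D'; unfold f; destruct constructive_indefinite_description; auto. }
      assert (HUsub : forall D, (D = E \/ ch D) -> U (fun D' => D (f D'))).
      { intros D HD. apply (filter_mono U (sub D)); auto. apply HUB; exists D; auto.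
        intros D' [HD' H']. apply H'. apply Hf'; auto. }
      destruct (compact_lim X U f E M HU Ecl Ebd (HUsub E (or_introl eq_refl))) as [es [Hes Hconv]].
      assert (HI : I' es).
      { split; auto. intros D HD.
        destruct (compact_lim X U f D M HU (proj1 (HP D HD)) (sub_bd D (proj1 (proj2 (HP D HD)))) (HUsub D (or_intror HD))) as [g [Hg Hgc]].
        assert (g = es). { apply functional_extensionality; intro x. apply (conv_unique U (fun i => f i x)); auto. }
        subst; auto. }
      destruct (filter_ex U _ HU' (filter_and U _ _ HU' (HUB (sub E) ltac:(exists E; auto))
          (filter_forall_lt U (fun j i => Rabs (f i (xs j) - es (xs j)) < eps / 2) n HU' (fun j _ => Hconv (xs j) (eps/2) ltac:(lra)))))
        as [D' [[HD' _] Hclose]].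
      destruct (proj2 (Hf' D' HD') es HI) as [j [Hj Hge]]. specialize (Hclose j Hj). lra. }
    destruct Hclaim as [D0 [HD0 Hgood]].
    assert (HkD0 : wstar_closure (conv_hull D0) k) by (destruct HD0 as [->|HD0]; auto; apply HP; auto).
    destruct (proj2 HkD0 n xs (eps/2) ltac:(lra)) as [g [[N [c [e [Hce [Hc Hg]]]]] Hgk]].
    assert (Hcs : forall j, exists cj, (j < N)%nat -> I' cj /\ forall i, (i < n)%nat -> Rabs (e j (xs i) - cj (xs i)) < eps / 2).
    { intros j. apply (choose_impl (fun _ => 0) (fun _ => True) _). intros Hj. apply Hgood. apply (Hce j Hj). }
    set (cs := fun j => proj1_sig (constructive_indefinite_description _ (Hcs j))).
    assert (Hcs' : forall j, (j < N)%nat -> I' (cs j) /\ forall i, (i < n)%nat -> Rabs (e j (xs i) - cs j (xs i)) < eps / 2).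
    { intros j; unfold cs; destruct constructive_indefinite_description; auto. }
    exists (fun x => rsum N (fun j => c j * cs j x)). split.
    + exists N, c, cs. split; [|split]; auto. intros j Hj; split; [apply Hce; auto|apply Hcs'; auto].
    + intros i Hi. specialize (Hgk i Hi). rewrite Hg in Hgk.
      assert (Hsh : Rabs (rsum N (fun j => c j * e j (xs i)) - rsum N (fun j => c j * cs j (xs i))) <= eps / 2).
      { apply conv_shift; auto. intros j Hj; apply Hce; auto. intros j Hj. left. apply Hcs'; auto. }
      replace (k (xs i) - rsum N (fun j => c j * cs j (xs i))) with
        ((k (xs i) - rsum N (fun j => c j * e j (xs i))) + (rsum N (fun j => c j * e j (xs i)) - rsum N (fun j => c j * cs j (xs i)))) by ring.
      eapply Rle_lt_trans; [apply Rabs_triang|]. lra.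
Qed.

Lemma minimal_set : exists E', Pm E' /\ forall C, Pm C -> (forall e, C e -> E' e) -> forall e, E' e -> C e.
Proof.
  set (A := {C | Pm C}).
  set (R0 := fun x y : A => forall e, proj1_sig y e -> proj1_sig x e).
  destruct (zorn_gen A R0) as [[E' HE'] Hmax].
  - intros x e H; auto.
  - intros x y z H1 H2 e H; auto.
  - intros ch' Hch'.
    set (ch := fun D => exists x, ch' x /\ proj1_sig x = D).
    assert (HP : Pm (fun e => E e /\ forall D, ch D -> D e)).
    { apply chain_lemma.
      - intros D [x [_ <-]]. apply (proj2_sig x).
      - intros D D' [x [Hx <-]] [y [Hy <-]]. destruct (Hch' x y Hx Hy) as [H|H]; [right|left]; auto. }
    exists (exist _ _ HP). intros x Hx e He. simpl in He. apply He. exists x; auto.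
  - exists E'; split; auto. intros C HC Hsub e He.
    apply (Hmax (exist _ C HC)); auto.
Qed.

End Core.

Open Scope R_scope.

Definition isopen {X : Banach} (O : (X -> R) -> Prop) :=
  forall f, O f -> exists n xs eps, 0 < eps /\
    forall g, (forall j, (j < n)%nat -> Rabs (g (xs j) - f (xs j)) < eps) -> O g.

Definition cM (M : R) (m : nat) := M - / (INR m + 1).

Definition En {X : Banach} (M : R) (m : nat) (e : X -> R) := forall x, Rabs (e x) <= cM M m * vnorm x.

Lemma isopen_and {X : Banach} (O : (X -> R) -> Prop) y z r :
  isopen O -> isopen (fun f => O f /\ Rabs (f y - z) < r).
Proof.
  intros HO f [Hf Hfr]. destruct (HO f Hf) as [n [xs [eps [He Hg]]]].
  set (d := r - Rabs (f y - z)).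
  exists (S n), (fun j => if Nat.eqb j n then y else xs j), (Rmin eps d). split.
  { apply Rmin_glb_lt; unfold d; lra. }
  intros g Hc. split.
  - apply Hg. intros j Hj. specialize (Hc j ltac:(lia)).
    destruct (Nat.eqb_spec j n); [lia|]. eapply Rlt_le_trans; [apply Hc|apply Rmin_l].
  - specialize (Hc n ltac:(lia)). rewrite Nat.eqb_refl in Hc.
    assert (Rabs (g y - f y) < d) by (eapply Rlt_le_trans; [apply Hc|apply Rmin_r]).
    replace (g y - z) with ((g y - f y) + (f y - z)) by ring.
    eapply Rle_lt_trans; [apply Rabs_triang|]. unfold d in *; lra.
Qed.

Section Baire.
Variable X : Banach.
Variable M : R.
Variable E' : (X -> R) -> Prop.
Hypothesis Ecl : wstar_closed E'.
Hypothesis Ebd : dual_bd X E' M.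
Hypothesis Ecov : forall e, E' e -> exists m, En M m e.

Lemma baire : (exists e0, E' e0) ->
  exists m (O : (X -> R) -> Prop), isopen O /\ (exists e, O e /\ E' e) /\ forall e, O e -> E' e -> En M m e.
Proof.
  intros [e0 He0]. apply NNPP; intro Hn.
  assert (H : forall m (O : (X -> R) -> Prop), isopen O -> (exists e, O e /\ E' e) -> exists e, O e /\ E' e /\ ~ En M m e).
  { intros m O HO Hne. apply NNPP; intro H1. apply Hn. exists m, O; split; [|split]; auto.
    intros e He1 He2. apply NNPP; intro H2. apply H1. exists e; auto. }
  set (St := {p : ((X -> R) -> Prop) * (X -> R) | isopen (fst p) /\ fst p (snd p) /\ E' (snd p)}).
  assert (Hstep : forall (m : nat) (s : St), exists s' : St,
     (forall f, fst (proj1_sig s') f -> fst (proj1_sig s) f) /\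
     exists y z r, 0 < r /\ (forall f, fst (proj1_sig s') f -> Rabs (f y - z) < r) /\
        cM M m * vnorm y + 2 * r <= Rabs z).
  { intros m [[O e] [HO [HOe HEe]]]. simpl.
    destruct (H m O HO (ex_intro _ e (conj HOe HEe))) as [e' [HOe' [HEe' Hne]]].
    assert (Hy : exists y, cM M m * vnorm y < Rabs (e' y)).
    { apply NNPP; intro H2; apply Hne; intros x. apply Rnot_lt_le; intro H3; apply H2; exists x; auto. }
    destruct Hy as [y Hy].
    set (r := (Rabs (e' y) - cM M m * vnorm y) / 2).
    set (O' := fun f => O f /\ Rabs (f y - e' y) < r).
    assert (HO' : isopen (fst (O', e')) /\ fst (O', e') (snd (O', e')) /\ E' (snd (O', e'))).
    { simpl. split; [apply isopen_and; auto|split; auto]. split; auto.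
      rewrite Rminus_diag, Rabs_R0. unfold r; lra. }
    exists (exist _ (O', e') HO'). simpl. split.
    - intros f [Hf _]; auto.
    - exists y, (e' y), r. split; [unfold r; lra|split].
      + intros f [_ Hf]; auto.
      + unfold r; lra. }
  assert (Hs0 : isopen (fst ((fun _ : X -> R => True), e0)) /\ fst ((fun _ : X -> R => True), e0) (snd ((fun _ : X -> R => True), e0)) /\ E' (snd ((fun _ : X -> R => True), e0))).
  { simpl. split; [|split; auto]. intros f _. exists 0%nat, (fun _ => vzero), 1. split; [lra|auto]. }
  set (s0 := exist _ _ Hs0 : St).
  set (step := fun m s => proj1_sig (constructive_indefinite_description _ (Hstep m s))).
  assert (Hstep' : forall m s, (forall f, fst (proj1_sig (step m s)) f -> fst (proj1_sig s) f) /\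
     exists y z r, 0 < r /\ (forall f, fst (proj1_sig (step m s)) f -> Rabs (f y - z) < r) /\
        cM M m * vnorm y + 2 * r <= Rabs z).
  { intros m s; unfold step; destruct constructive_indefinite_description; auto. }
  set (sq := fix sq (m : nat) : St := match m with O => s0 | S m' => step m' (sq m') end).
  set (Os := fun m => fst (proj1_sig (sq m))).
  set (es := fun m => snd (proj1_sig (sq m))).
  assert (Hes : forall m, Os m (es m) /\ E' (es m)).
  { intros m. unfold Os, es. destruct (sq m) as [p Hp]; simpl; tauto. }
  assert (Hmono : forall m t, (m <= t)%nat -> forall f, Os t f -> Os m f).
  { intros m t Hmt. induction Hmt; auto. intros f Hf. apply IHHmt. apply (proj1 (Hstep' m0 (sq m0))). exact Hf. }
  set (Bs := fun b : nat -> Prop => exists m, b = fun t => (m <= t)%nat).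
  destruct (ultrafilter_lemma Bs) as [U [HU HUB]].
  { exists (fun t => (0 <= t)%nat), 0%nat; auto. }
  { intros b [m ->]. exists m; auto. }
  { intros b1 b2 [m1 ->] [m2 ->]. exists (fun t => (Nat.max m1 m2 <= t)%nat). split.
    exists (Nat.max m1 m2); auto. intros i Hi; split; lia. }
  pose proof (proj1 HU) as HU'.
  destruct (compact_lim X U es E' M HU Ecl Ebd (filter_true U _ HU' (fun t => proj2 (Hes t)))) as [e [He Hconv]].
  destruct (Ecov e He) as [m Hm].
  destruct (proj2 (Hstep' m (sq m))) as [y [z [r [Hr [Hyz Hc]]]]].
  assert (Hb : Rabs (e y - z) <= r).
  { apply (conv_bound U (fun t => es t y - z)); auto.
    - apply (filter_mono U (fun t => (S m <= t)%nat)); auto. apply HUB; exists (S m); auto.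
      intros t Ht. left. apply Hyz. apply (Hmono (S m) t Ht). apply Hes.
    - apply conv_plus; auto. apply conv_const; auto. }
  specialize (Hm y). pose proof (Rabs_triang_inv z (e y)).
  rewrite Rabs_minus_sym in Hb. lra.
Qed.

End Baire.

Open Scope R_scope.

Lemma finite_min (n : nat) (a : nat -> R) (b : R) :
  (forall j, (j < n)%nat -> a j < b) -> exists d, 0 < d /\ forall j, (j < n)%nat -> a j + d < b.
Proof.
  induction n as [|n IH]; intros H.
  - exists 1; split; [lra|]. intros; lia.
  - destruct IH as [d [Hd Hd2]]. { intros j Hj; apply H; lia. }
    assert (Hn := H n ltac:(lia)).
    exists (Rmin d ((b - a n) / 2)). split.
    + apply Rmin_glb_lt; lra.
    + intros j Hj. destruct (Nat.eq_dec j n) as [->|Hne].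
      * pose proof (Rmin_r d ((b - a n)/2)); lra.
      * pose proof (Rmin_l d ((b - a n)/2)). specialize (Hd2 j ltac:(lia)). lra.
Qed.

Section Dec.
Variable X : Banach.

Lemma conv_hull_dual (S : (X -> R) -> Prop) M g :
  (forall e, S e -> in_dual e) -> (forall e, S e -> forall x, Rabs (e x) <= M * vnorm x) ->
  conv_hull S g -> in_dual g.
Proof.
  intros HS HB Hg. pose proof (conv_hull_bound X S M g HB Hg) as Hgb.
  destruct Hg as [n [c [e [He [Hc Hg]]]]].
  split; [|split].
  - intros x y. rewrite !Hg. rewrite <- rsum_plus. apply rsum_ext. intros j Hj.
    rewrite (proj1 (HS _ (proj2 (He j Hj)))). ring.
  - intros a x. rewrite !Hg. rewrite <- rsum_scal. apply rsum_ext. intros j Hj.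
    rewrite (proj1 (proj2 (HS _ (proj2 (He j Hj))))). ring.
  - exists M; auto.
Qed.

Lemma conv_filter (S P : (X -> R) -> Prop) N (c : nat -> R) (e : nat -> X -> R) :
  (forall j, (j < N)%nat -> 0 <= c j) -> (forall j, (j < N)%nat -> P (e j) -> S (e j)) ->
  0 < rsum N (fun j => ind (P (e j)) (c j)) ->
  conv_hull S (fun x => rsum N (fun j => ind (P (e j)) (c j * e j x)) / rsum N (fun j => ind (P (e j)) (c j))).
Proof.
  intros Hc HPS Hm. set (m := rsum N (fun j => ind (P (e j)) (c j))) in *.
  assert (Hj0 : exists j0, (j0 < N)%nat /\ P (e j0)).
  { apply NNPP; intro Hn. assert (m = 0).
    { apply rsum_zero. intros j Hj. unfold ind. destruct excluded_middle_informative; auto.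
      exfalso; apply Hn; exists j; auto. }
    lra. }
  destruct Hj0 as [j0 [Hj0 HPj0]].
  exists N, (fun j => ind (P (e j)) (c j) / m),
    (fun j => if excluded_middle_informative (P (e j)) then e j else e j0).
  split; [|split].
  - intros j Hj. unfold ind. destruct excluded_middle_informative.
    + split; [apply Rmult_le_pos; [auto|left; apply Rinv_0_lt_compat; auto]|auto].
    + split; [unfold Rdiv; lra|auto].
  - unfold Rdiv. rewrite (rsum_ext N _ (fun j => / m * ind (P (e j)) (c j))) by (intros; ring).
    rewrite rsum_scal. fold m. field. lra.
  - intros x. unfold Rdiv. rewrite Rmult_comm, <- rsum_scal. apply rsum_ext. intros j Hj.
    unfold ind. destruct excluded_middle_informative; ring.
Qed.

End Dec.

Section Final.
Variable X : Banach.
Variable M : R.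
Variable E : (X -> R) -> Prop.
Hypothesis Ecl : wstar_closed E.
Hypothesis Ebd : dual_bd X E M.
Hypothesis Ecov : forall e, E e -> exists m, En M m e.
Variable k : X -> R.
Hypothesis Hk : wstar_closure (conv_hull E) k.

Theorem core : exists d, 0 < d /\ forall x, Rabs (k x) <= (M - d) * vnorm x.
Proof.
  destruct (minimal_set X M E Ecl Ebd k Hk) as [E' [[E'cl [E'E Hk']] Hmin]].
  assert (E'bd : dual_bd X E' M) by (apply (sub_bd X M E Ebd); auto).
  assert (Hne : exists e0, E' e0).
  { destruct (proj2 Hk' 0%nat (fun _ => vzero) 1 ltac:(lra)) as [g [[N [c [e [He [Hc _]]]]] _]].
    destruct N as [|N]; [simpl in Hc; lra|]. exists (e 0%nat). apply (He 0%nat); lia. }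
  destruct (baire X M E' E'cl E'bd (fun e He => Ecov e (E'E e He)) Hne) as [m [O [HO [[e0 [HOe0 HEe0]] HOm]]]].
  destruct (HO e0 HOe0) as [n0 [xs0 [eps0 [Heps0 HOn]]]].
  set (O' := fun f : X -> R => forall j, (j < n0)%nat -> Rabs (f (xs0 j) - e0 (xs0 j)) < eps0).
  set (B := fun f : X -> R => E' f /\ exists j, (j < n0)%nat /\ eps0 / 2 <= Rabs (f (xs0 j) - e0 (xs0 j))).
  assert (Bcl : wstar_closed B).
  { intros f Hf. split. apply E'cl. apply (closure_mono X B); auto. intros g [Hg _]; auto.
    apply NNPP; intro Hn.
    assert (Hlt : forall j, (j < n0)%nat -> Rabs (f (xs0 j) - e0 (xs0 j)) < eps0 / 2).
    { intros j Hj. apply Rnot_le_lt; intro H; apply Hn; exists j; auto. }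
    destruct (finite_min n0 _ _ Hlt) as [d [Hd Hd2]].
    destruct (proj2 Hf n0 xs0 d Hd) as [g [[_ [j [Hj Hgj]]] Hg2]].
    specialize (Hd2 j Hj). specialize (Hg2 j Hj).
    assert (Rabs (g (xs0 j) - e0 (xs0 j)) <= Rabs (f (xs0 j) - g (xs0 j)) + Rabs (f (xs0 j) - e0 (xs0 j))).
    { replace (g (xs0 j) - e0 (xs0 j)) with (- (f (xs0 j) - g (xs0 j)) + (f (xs0 j) - e0 (xs0 j))) by ring.
      eapply Rle_trans; [apply Rabs_triang|]. rewrite Rabs_Ropp; lra. }
    lra. }
  assert (HnotB : ~ wstar_closure (conv_hull B) k).
  { intros HkB. assert (HB : B e0).
    { apply (Hmin B).
      - split; [auto|split; [intros e [He _]; apply E'E; auto|auto]].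
      - intros e [He _]; auto.
      - auto. }
    destruct HB as [_ [j [Hj Hj2]]]. rewrite Rminus_diag, Rabs_R0 in Hj2. lra. }
  set (Idx := ((nat * (nat -> X)) * R)%type).
  assert (Hrep : forall i : Idx, exists t : (nat * (nat -> R)) * (nat -> X -> R),
    (forall j, (j < fst (fst t))%nat -> 0 <= snd (fst t) j /\ E' (snd t j)) /\ rsum (fst (fst t)) (snd (fst t)) = 1 /\
    (0 < snd i -> forall j, (j < fst (fst i))%nat ->
       Rabs (k (snd (fst i) j) - rsum (fst (fst t)) (fun l => snd (fst t) l * snd t l (snd (fst i) j))) < snd i)).
  { intros [[n xs] eps]. simpl.
    destruct (Rlt_dec 0 eps) as [Hep|Hep].
    - destruct (proj2 Hk' n xs eps Hep) as [g [[N [c [e [He [Hc Hg]]]]] Hgk]].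
      exists ((N, c), e). simpl. split; [auto|split; auto]. intros _ j Hj. rewrite <- Hg. auto.
    - destruct (proj2 Hk' 0%nat xs 1 ltac:(lra)) as [g [[N [c [e [He [Hc Hg]]]]] Hgk]].
      exists ((N, c), e). simpl. split; [auto|split; auto]. intros; lra. }
  set (rep := fun i => proj1_sig (constructive_indefinite_description _ (Hrep i))).
  assert (Hrep' := fun i => proj2_sig (constructive_indefinite_description _ (Hrep i))).
  fold rep in Hrep'.
  set (NN := fun i => fst (fst (rep i))). set (cc := fun i => snd (fst (rep i))). set (ee := fun i => snd (rep i)).
  set (g := fun i x => rsum (NN i) (fun l => cc i l * ee i l x)).
  set (Bs := fun b : Idx -> Prop => exists n xs eps, 0 < eps /\
       b = fun i => 0 < snd i <= eps /\ forall j, (j < n)%nat -> exists j', (j' < fst (fst i))%nat /\ snd (fst i) j' = xs j).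
  destruct (ultrafilter_lemma Bs) as [U [HU HUB]].
  { exists (fun i : Idx => 0 < snd i <= 1 /\ forall j, (j < 0)%nat -> exists j', (j' < fst (fst i))%nat /\ snd (fst i) j' = (fun _ => vzero) j).
    exists 0%nat, (fun _ => vzero), 1; split; auto; lra. }
  { intros b [n [xs [eps [He ->]]]]. exists ((n, xs), eps). simpl. split; [lra|]. intros j Hj; exists j; auto. }
  { intros b1 b2 [n1 [xs1 [eps1 [He1 ->]]]] [n2 [xs2 [eps2 [He2 ->]]]].
    exists (fun i : Idx => 0 < snd i <= Rmin eps1 eps2 /\ forall j, (j < n1 + n2)%nat -> exists j', (j' < fst (fst i))%nat /\
       snd (fst i) j' = (fun j => if Nat.ltb j n1 then xs1 j else xs2 (j - n1)%nat) j).
    split.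
    - exists (n1 + n2)%nat, (fun j => if Nat.ltb j n1 then xs1 j else xs2 (j - n1)%nat), (Rmin eps1 eps2).
      split; auto. apply Rmin_glb_lt; auto.
    - intros i [[Hi1 Hi2] Hi3]. pose proof (Rmin_l eps1 eps2). pose proof (Rmin_r eps1 eps2). split; split.
      + split; lra.
      + intros j Hj. destruct (Hi3 j ltac:(lia)) as [j' [Hj' Hj'']]. exists j'; split; auto.
        rewrite Hj''. destruct (Nat.ltb_spec j n1); auto; lia.
      + split; lra.
      + intros j Hj. destruct (Hi3 (n1 + j)%nat ltac:(lia)) as [j' [Hj' Hj'']]. exists j'; split; auto.
        rewrite Hj''. destruct (Nat.ltb_spec (n1 + j) n1); [lia|]. f_equal; lia. }
  pose proof (proj1 HU) as HU'.
  assert (Hgk : forall x, conv U (fun i => g i x) (k x)).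
  { intros x eps He.
    apply (filter_mono U (fun i : Idx => 0 < snd i <= eps /\ forall j, (j < 1)%nat -> exists j', (j' < fst (fst i))%nat /\ snd (fst i) j' = (fun _ => x) j)); auto.
    { apply HUB. exists 1%nat, (fun _ => x), eps; split; auto. }
    intros i [[Hi1 Hi2] Hi3]. destruct (Hi3 0%nat ltac:(lia)) as [j' [Hj' Hj'']].
    destruct (Hrep' i) as [_ [_ Hcl]]. specialize (Hcl Hi1 j' Hj'). rewrite Hj'' in Hcl.
    rewrite Rabs_minus_sym. unfold g, NN, cc, ee, rep. lra. }
  assert (Hrep1 : forall i l, (l < NN i)%nat -> 0 <= cc i l /\ E' (ee i l)) by (intros i; apply (Hrep' i)).
  assert (Hrep2 : forall i, rsum (NN i) (cc i) = 1) by (intros i; apply (Hrep' i)).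
  set (lam := fun i => rsum (NN i) (fun l => ind (O' (ee i l)) (cc i l))).
  assert (Hlam : forall i, 0 <= lam i <= 1).
  { intros i. rewrite <- (Hrep2 i). unfold lam. rewrite (rsum_split (NN i) (fun l => O' (ee i l)) (cc i)). split.
    - apply rsum_nonneg. intros l Hl. unfold ind; destruct excluded_middle_informative; [apply Hrep1; auto|lra].
    - assert (0 <= rsum (NN i) (fun l => ind (~ O' (ee i l)) (cc i l))); [|lra].
      apply rsum_nonneg. intros l Hl. unfold ind; destruct excluded_middle_informative; [apply Hrep1; auto|lra]. }
  destruct (lim_ex U lam 1 HU) as [L HL].
  { apply filter_true; auto. intros i. rewrite Rabs_right; [apply Hlam|apply Rle_ge, Hlam]. }
  assert (HL0 : 0 <= L).
  { apply (conv_le U (fun _ => 0) lam); auto. apply filter_true; auto; intros; apply Hlam. apply conv_const; auto. }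
  destruct (Rle_lt_or_eq_dec 0 L HL0) as [HLp|HL0'].
  - (* positive mass near e0 *)
    exists (L / (INR m + 1)). split.
    { apply Rdiv_lt_0_compat; auto. pose proof (pos_INR m); lra. }
    intros x.
    assert (Hbd : forall i, Rabs (g i x) <= M * vnorm x + (- (/ (INR m + 1) * vnorm x)) * lam i).
    { intros i. unfold g. eapply Rle_trans; [apply rsum_abs|].
      apply Rle_trans with (rsum (NN i) (fun l => (M * vnorm x) * cc i l + (- (/ (INR m + 1) * vnorm x)) * ind (O' (ee i l)) (cc i l))).
      - apply rsum_le. intros l Hl. destruct (Hrep1 i l Hl) as [Hc HE].
        rewrite Rabs_mult, Rabs_right by lra. unfold ind. destruct excluded_middle_informative as [HO'|HO'].
        + assert (Hm : En M m (ee i l)) by (apply HOm; auto; apply HOn; intros j Hj; apply HO'; auto).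
          specialize (Hm x). unfold cM in Hm.
          assert (cc i l * Rabs (ee i l x) <= cc i l * ((M - / (INR m + 1)) * vnorm x)) by (apply Rmult_le_compat_l; auto).
          nra.
        + pose proof (proj2 (Ebd _ (E'E _ HE)) x).
          assert (cc i l * Rabs (ee i l x) <= cc i l * (M * vnorm x)) by (apply Rmult_le_compat_l; auto).
          nra.
      - rewrite rsum_plus, !rsum_scal, Hrep2. unfold lam. lra. }
    apply (conv_le U (fun i => Rabs (g i x)) (fun i => M * vnorm x + (- (/ (INR m + 1) * vnorm x)) * lam i)); auto.
    + apply filter_true; auto.
    + apply conv_abs; auto.
    + replace ((M - L / (INR m + 1)) * vnorm x) with (M * vnorm x + (- (/ (INR m + 1) * vnorm x)) * L).
      2:{ unfold Rdiv. ring. }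
      apply conv_plus; auto. apply conv_const; auto. apply conv_mul; auto. apply conv_const; auto.
  - (* mass goes to B: contradiction *)
    exfalso. subst L. apply HnotB.
    set (bi := fun i x => rsum (NN i) (fun l => ind (~ O' (ee i l)) (cc i l * ee i l x)) / rsum (NN i) (fun l => ind (~ O' (ee i l)) (cc i l))).
    assert (Hmass : forall i, rsum (NN i) (fun l => ind (~ O' (ee i l)) (cc i l)) = 1 - lam i).
    { intros i. rewrite <- (Hrep2 i). rewrite (rsum_split (NN i) (fun l => O' (ee i l)) (cc i)). unfold lam; ring. }
    assert (Hsmall : U (fun i => lam i < 1/2)).
    { apply (filter_mono U _ _ HU' (HL (1/2) ltac:(lra))). intros i Hi. apply rabl in Hi. lra. }
    assert (HBbd : forall e, B e -> forall x, Rabs (e x) <= M * vnorm x).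
    { intros e [He _]. apply (Ebd e (E'E e He)). }
    assert (HCB : forall i, lam i < 1/2 -> wstar_closure (conv_hull B) (bi i)).
    { intros i Hi. assert (Hc : conv_hull B (bi i)).
      { apply (conv_filter X B (fun f => ~ O' f)).
        - intros l Hl; apply Hrep1; auto.
        - intros l Hl HnO. split; [apply Hrep1; auto|].
          apply NNPP; intro Hn. apply HnO. intros j Hj. apply Rnot_le_lt; intro Hle. apply Hn. exists j; split; auto. lra.
        - rewrite Hmass; lra. }
      apply closure_incl; auto. apply (conv_hull_dual X B M); auto.
      intros e [He _]. apply (Ebd e (E'E e He)). }
    destruct (compact_lim X U bi (wstar_closure (conv_hull B)) M HU (closure_closed X _) (cc_bd X B M HBbd)
        (filter_mono U _ _ HU' Hsmall HCB)) as [b [Hb Hbc]].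
    assert (Hkb : k = b).
    { apply functional_extensionality; intro x.
      set (Ai := fun i => rsum (NN i) (fun l => ind (O' (ee i l)) (cc i l * ee i l x))).
      assert (HAi : U (fun i => Ai i = g i x + (-1) * ((1 - lam i) * bi i x))).
      { apply (filter_mono U _ _ HU' Hsmall). intros i Hi. unfold bi. rewrite Hmass.
        unfold g, Ai. rewrite (rsum_split (NN i) (fun l => O' (ee i l)) (fun l => cc i l * ee i l x)). field. lra. }
      assert (HAc : conv U Ai (k x + (-1) * ((1 - 0) * b x))).
      { apply (conv_ext U (fun i => g i x + (-1) * ((1 - lam i) * bi i x)) Ai _ HU').
        { apply (filter_mono U _ _ HU' HAi). intros i Hi; symmetry; exact Hi. }
        apply conv_plus; auto. apply (conv_mul U (fun _ => -1)); auto. apply conv_const; auto.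
        apply conv_mul; auto.
        assert (Hl : conv U (fun i => 1 + (-1) * lam i) (1 + (-1) * 0)).
        { apply conv_plus; auto. apply conv_const; auto. apply (conv_mul U (fun _ => -1)); auto. apply conv_const; auto. }
        intros eps He. apply (filter_mono U _ _ HU' (Hl eps He)). intros i Hi.
        replace (1 - lam i - (1 - 0)) with (1 + -1 * lam i - (1 + -1 * 0)) by ring. exact Hi. }
      assert (HAb : forall i, Rabs (Ai i) <= (M * vnorm x) * lam i).
      { intros i. unfold Ai, lam. eapply Rle_trans; [apply rsum_abs|]. rewrite <- rsum_scal. apply rsum_le.
        intros l Hl. destruct (Hrep1 i l Hl) as [Hc HE]. unfold ind. destruct excluded_middle_informative.
        - rewrite Rabs_mult, Rabs_right by lra. pose proof (proj2 (Ebd _ (E'E _ HE)) x).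
          assert (cc i l * Rabs (ee i l x) <= cc i l * (M * vnorm x)) by (apply Rmult_le_compat_l; auto). nra.
        - rewrite Rabs_R0; lra. }
      assert (Habs : Rabs (k x + (-1) * ((1 - 0) * b x)) <= 0).
      { apply (conv_le U (fun i => Rabs (Ai i)) (fun i => (M * vnorm x) * lam i)); auto.
        - apply filter_true; auto.
        - apply conv_abs; auto.
        - replace 0 with (M * vnorm x * 0) by ring. apply conv_mul; auto. apply conv_const; auto. }
      pose proof (Rabs_pos (k x + (-1) * ((1 - 0) * b x))).
      assert (Rabs (k x + (-1) * ((1 - 0) * b x)) = 0) by lra.
      destruct (Req_dec (k x + -1 * ((1 - 0) * b x)) 0) as [H1|H1]; [lra|].
      apply Rabs_no_R0 in H1. lra. }
    rewrite Hkb; auto.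
Qed.

End Final.

Open Scope R_scope.

Theorem theorem1 (X : Banach) (E : (X -> R) -> Prop) :
  infinite_dimensional X ->
  dual_subset E ->
  wstar_closed E ->
  dual_bounded E ->
  ~ has_max_length E ->
  ~ has_max_length (wstar_closed_conv_hull E).
Proof.
  intros _ Hsub Hcl [M0 HM0] Hno [s [Hs Hsd]].
  unfold wstar_closed_conv_hull in *.
  assert (Hne : exists e1, E e1).
  { destruct (proj2 Hs 0%nat (fun _ => vzero) 1 ltac:(lra)) as [g [[N [c [e [He [Hc _]]]]] _]].
    destruct N as [|N]; [simpl in Hc; lra|]. exists (e 0%nat). apply (He 0%nat); lia. }
  destruct Hne as [e1 He1].
  set (SE := fun t => exists e, E e /\ t = dnorm e).
  destruct (completeness SE) as [M HM].
  { exists M0. intros t [e [He ->]]. auto. }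
  { exists (dnorm e1), e1; auto. }
  assert (HeM : forall e, E e -> dnorm e <= M) by (intros e He; apply (proj1 HM); exists e; auto).
  assert (HeM' : forall e, E e -> dnorm e < M).
  { intros e He. destruct (Rle_lt_or_eq_dec _ _ (HeM e He)) as [H|H]; auto.
    exfalso; apply Hno. exists e; split; auto. pose proof (sup_set_lub _ M HM) as Hss; unfold SE in Hss; rewrite Hss; auto. }
  assert (HMpos : 0 < M) by (pose proof (dnorm_nonneg X e1 (Hsub e1 He1)); pose proof (HeM' e1 He1); lra).
  assert (Ebd : dual_bd X E M).
  { intros e He. split; auto. intros x. eapply Rle_trans; [apply dnorm_bound; auto|].
    apply Rmult_le_compat_r; [apply vnorm_nonneg|auto]. }
  assert (Ecov : forall e, E e -> exists m, En M m e).
  { intros e He. set (d := M - dnorm e). assert (Hd : 0 < d) by (unfold d; pose proof (HeM' e He); lra).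
    destruct (INR_archimed d 1 Hd) as [m Hm]. exists m. intros x.
    assert (Hm' : / (INR m + 1) < d).
    { pose proof (pos_INR m). apply (Rmult_lt_reg_l (INR m + 1)); [lra|]. rewrite Rinv_r by lra. nra. }
    eapply Rle_trans; [apply dnorm_bound; auto|]. apply Rmult_le_compat_r; [apply vnorm_nonneg|].
    unfold cM, d in *; lra. }
  destruct (core X M E Hcl Ebd Ecov s Hs) as [d [Hd Hsb]].
  set (d' := Rmin d (M / 2)).
  assert (Hd'1 : d' <= d) by apply Rmin_l. assert (Hd'2 : d' <= M / 2) by apply Rmin_r.
  assert (Hd' : 0 < d') by (apply Rmin_glb_lt; lra).
  assert (Hsle : dnorm s <= M - d').
  { apply dnorm_le; [apply Hs|lra|]. intros x. eapply Rle_trans; [apply Hsb|].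
    apply Rmult_le_compat_r; [apply vnorm_nonneg|lra]. }
  assert (HK : is_lub (fun t => exists s', wstar_closure (conv_hull E) s' /\ t = dnorm s') M).
  { split.
    - intros t [s' [Hs' ->]]. destruct (cc_bd X E M (fun e He => proj2 (Ebd e He)) s' Hs') as [Hd1 Hd2].
      apply dnorm_le; auto; lra.
    - intros u Hu. apply (proj2 HM). intros t [e [He ->]]. apply Hu. exists e; split; auto.
      apply closure_incl; auto. apply conv_hull_single; auto. }
  rewrite (sup_set_lub _ M HK) in Hsd. lra.
Qed.
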